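(* Fix $L\ge1$, rates $a_1,\ldots,a_L>0$, $\alpha,\beta>0$ with $\alpha a_i<1$ for all $i$, an $L$-particle configuration $\vec{\mathsf{x}}$, and $m\in\{1,\ldots,L\}$. With $\vec{\mathsf{y}}$, $\vec{\mathsf{x}}'$, $\mathsf{y}^{\dagger}_m$ and $\vec{\mathsf{y}}^{\,BG}$ constructed as described in the context, conditionally on $\vec{\mathsf{x}}$ the joint distribution of $(\mathsf{y}_{m-1},\mathsf{y}^{\dagger}_m)$ is the same as the joint distribution of $(\mathsf{y}_{m-1},\mathsf{y}^{BG}_m)$.
   Context: Fix $q\in(0,1)$; $(z;q)_k=\prod_{i=0}^{k-1}(1-zq^i)$. For $\gamma\in(0,1)$ and $m\in\mathbb{Z}_{\ge0}$ let $\mathbf{p}_{m,\gamma}(j)=\gamma^j(\gamma;q)_{m-j}\frac{(q;q)_m}{(q;q)_j(q;q)_{m-j}}$, $0\le j\le m$, and $\mathbf{p}_{+\infty,\gamma}(j)=\gamma^j(\gamma;q)_\infty/(q;q)_j$, $j\ge0$ (probability distributions). Configurations: $\vec{\mathsf{x}}=(\mathsf{x}_1>\ldots>\mathsf{x}_L)$ in $\mathbb{Z}$, with the convention $\mathsf{x}_0=+\infty$. Geometric $q$-TASEP move $\mathbf{G}_\alpha$ (rates $a_i$): each particle $i$ independently jumps to the right by $j$ with probability $\mathbf{p}_{\mathsf{x}_{i-1}-\mathsf{x}_i-1,\,a_i\alpha}(j)$. Bernoulli $q$-TASEP move $\mathbf{B}_\beta$: sequentially for $i=1,\ldots,L$,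 particle $i$ jumps right by one with probability $a_i\beta/(1+a_i\beta)$ if $i=1$ or if particle $i-1$ has jumped in this move, and with probability $(1-q^{\mathsf{x}_{i-1}-\mathsf{x}_i-1})a_i\beta/(1+a_i\beta)$ otherwise (gaps measured before the move); else it stays. Vertex weights $\mathsf{L}_{u,a,\nu}(i_1,j_1;i_2,j_2)$, $i_1,i_2\in\mathbb{Z}_{\ge0}$, $j_1,j_2\in\{0,1\}$, vanish unless $i_1+j_1=i_2+j_2$, and for $g\in\mathbb{Z}_{\ge0}$: $\mathsf{L}(g,0;g,0)=\frac{1-auq^g}{1-au}$, $\mathsf{L}(g,0;g-1,1)=\frac{-au(1-q^g)}{1-au}$, $\mathsf{L}(g,1;g,1)=\frac{\nu q^g-au}{1-au}$, $\mathsf{L}(g,1;g+1,0)=\frac{1-\nu q^g}{1-au}$. Construction: given $\vec{\mathsf{x}}$, let $\vec{\mathsf{y}}$ be obtained by applying $\mathbf{B}_\beta$ and $\vec{\mathsf{x}}'$ by applying $\mathbf{G}_\alpha$, with independent randomness. Given $\mathsf{x}_{m-1},\mathsf{y}_{m-1},\mathsf{x}'_m$, set $i_1=\mathsf{x}_{m-1}-\mathsf{x}'_m-1$, $j_1=\mathsf{y}_{m-1}-\mathsf{x}_{m-1}$, sample $j_2\in\{0,1\}$ with probability $\mathsf{L}_{-\beta,a_m,\alpha a_m}(i_1,j_1;i_1+j_1-j_2,j_2)$, and set $\mathsf{y}^\dagger_m:=\mathsf{x}'_m+j_2$. For $m=1$, $\mathsf{x}_0=\mathsf{y}_0=+\infty$,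 $i_1=+\infty$ (with $q^{i_1}=0$), and $j_1$ may be taken $0$ or $1$ (the weights do not depend on this choice). Finally $\vec{\mathsf{y}}^{\,BG}$ is obtained from $\vec{\mathsf{y}}$ by applying a further geometric move $\mathbf{G}_\alpha$ with randomness independent of everything above. *)

(* Defs.v *)
From HB Require Import structures.
From mathcomp Require Import all_boot all_order all_algebra.
From mathcomp Require Import all_classical all_reals all_analysis.
Set Implicit Arguments. Unset Strict Implicit. Unset Printing Implicit Defensive.
Import Order.TTheory GRing.Theory Num.Theory numFieldNormedType.Exports.
Local Open Scope ring_scope.

Section Defs.
Variable R : realType.

Definition qpoch (q z : R) (k : nat) : R := \prod_(i < k) (1 - z * q ^+ i).
Definition qpoch_inf (q z : R) : R := limn (fun k : nat => qpoch q z k).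

(* extended naturals: [Some n] = n, [None] = +oo *)
Definition qpow (q : R) (g : option nat) : R :=
  if g is Some n then q ^+ n else 0.

(* p_{m,gamma}(j) for m : option nat (None = +oo) and j : int
   (zero outside the support {0..m}, resp. Z_{>=0}) *)
Definition pgeom (q : R) (m : option nat) (gam : R) (j : int) : R :=
  if (j < 0)%R then 0 else
  let n := absz j in
  match m with
  | Some m0 =>
      if (n <= m0)%N then
        gam ^+ n * qpoch q gam (m0 - n) *
        (qpoch q q m0 / (qpoch q q n * qpoch q q (m0 - n)))
      else 0
  | None => gam ^+ n * qpoch_inf q gam / qpoch q q n
  end.

(* vertex weight L_{u,a,nu}(i1,j1;i2,j2), i's in Z_{>=0} u {+oo}, j's in {0,1} *)
Definition ext_conserve (i1 : option nat) (j1 : bool) (i2 : option nat) (j2 : bool) : bool :=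
  match i1, i2 with
  | Some n1, Some n2 => (n1 + j1 == n2 + j2)%N
  | None, None => true
  | _, _ => false
  end.

Definition Lw (q u a nu : R) (i1 : option nat) (j1 : bool) (i2 : option nat) (j2 : bool) : R :=
  if ext_conserve i1 j1 i2 j2 then
    let qg := qpow q i1 in
    match j1, j2 with
    | false, false => (1 - a * u * qg) / (1 - a * u)
    | false, true  => (- (a * u) * (1 - qg)) / (1 - a * u)
    | true,  true  => (nu * qg - a * u) / (1 - a * u)
    | true,  false => (1 - nu * qg) / (1 - a * u)
    end
  else 0.

(* probability of sampling j2 given (i1, j1): L(i1,j1; i1+j1-j2, j2);
   vanishes when i1+j1-j2 < 0 *)
Definition Lsample (q u a nu : R) (i1 : option nat) (j1 j2 : bool) : R :=
  match i1 with
  | None => Lw q u a nu None j1 None j2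
  | Some n => if (j2 <= n + j1)%N then Lw q u a nu (Some n) j1 (Some (n + j1 - j2)%N) j2
              else 0
  end.

(* configuration x : nat -> int, particles indexed 1..L, x_0 = +oo *)
Definition gapx (x : nat -> int) (i : nat) : option nat :=
  if (i <= 1)%N then None else Some (absz (x i.-1 - x i - 1)%R).

(* Bernoulli move: jump indicators t = (b_1,...,b_L), b_i = nth false t i.-1 *)
Definition bit (Lp : nat) (t : Lp.-tuple bool) (i : nat) : bool := nth false t i.-1.

(* probability that particle i jumps (c = true) / stays (c = false),
   given whether particle i-1 has jumped (pj) *)
Definition bstep (q beta : R) (a : nat -> R) (x : nat -> int) (i : nat) (pj c : bool) : R :=
  let r := a i * beta / (1 + a i * beta) in
  let p := if (i == 1%N) || pj then r else (1 - qpow q (gapx x i)) * r in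
  if c then p else 1 - p.

Definition Bprob (q beta : R) (a : nat -> R) (x : nat -> int) (Lp : nat) (t : Lp.-tuple bool) : R :=
  \prod_(1 <= i < Lp.+1) bstep q beta a x i (bit t i.-1) (bit t i).

(* y_i = x_i + b_i ; y_0 = +oo represented by None *)
Definition ypos (x : nat -> int) (Lp : nat) (t : Lp.-tuple bool) (i : nat) : option int :=
  if i == 0%N then None else Some (x i + (bit t i)%:Z).

Definition yfin (x : nat -> int) (Lp : nat) (t : Lp.-tuple bool) (i : nat) : int :=
  x i + (bit t i)%:Z.

(* j_1 = y_{m-1} - x_{m-1}, taken to be 0 when m = 1 *)
Definition j1of (Lp : nat) (t : Lp.-tuple bool) (m : nat) : bool :=
  if (m <= 1)%N then false else bit t m.-1.

(* Joint law of (y_{m-1}, y^dagger_m), conditionally on x, evaluated at (w, v).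
   y_{m-1} in Z u {+oo} (None = +oo).  x'_m = x_m + g with
   g ~ p_{gap_m, a_m alpha}; j2 sampled with L_{-beta,a_m,alpha a_m}(i1,j1;.,j2);
   y^dagger_m = x'_m + j2.  Given v and j2, g = v - j2 - x_m is determined. *)
Definition law_dagger (q alpha beta : R) (a : nat -> R) (x : nat -> int)
    (Lp m : nat) (w : option int) (v : int) : R :=
  \sum_(t : Lp.-tuple bool)
    Bprob q beta a x t * (ypos x t m.-1 == w)%:R *
    \sum_(j2 : bool)
      let xm' := v - j2%:Z in
      let g := xm' - x m in
      let i1 := if (m <= 1)%N then None else Some (absz (x m.-1 - xm' - 1)%R) in
      pgeom q (gapx x m) (a m * alpha) g *
      Lsample q (- beta) (a m) (alpha * a m) i1 (j1of t m) j2.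

Definition gapy (x : nat -> int) (Lp : nat) (t : Lp.-tuple bool) (m : nat) : option nat :=
  if (m <= 1)%N then None else Some (absz (yfin x t m.-1 - yfin x t m - 1)%R).

(* Joint law of (y_{m-1}, y^BG_m), where y^BG_m = y_m + h,
   h ~ p_{y_{m-1}-y_m-1, a_m alpha}. *)
Definition law_BG (q alpha beta : R) (a : nat -> R) (x : nat -> int)
    (Lp m : nat) (w : option int) (v : int) : R :=
  \sum_(t : Lp.-tuple bool)
    Bprob q beta a x t * (ypos x t m.-1 == w)%:R *
    pgeom q (gapy x t m) (a m * alpha) (v - yfin x t m).

End Defs.

(* Main.v *)
Require Import Defs.
From HB Require Import structures.
From mathcomp Require Import all_boot all_order all_algebra.
From mathcomp Require Import all_classical all_reals all_analysis.
From mathcomp Require Import zify ring lra.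
Import Order.TTheory GRing.Theory Num.Theory.
Local Open Scope ring_scope.
Set Implicit Arguments. Unset Strict Implicit. Unset Printing Implicit Defensive.

Definition flipt (Lp k : nat) (t : Lp.-tuple bool) : Lp.-tuple bool :=
  [tuple nth false t i (+) (i == k :> nat) | i < Lp].

Lemma nth_flipt Lp k (t : Lp.-tuple bool) j :
  nth false (flipt k t) j = nth false t j (+) ((j == k) && (j < Lp)%N).
Proof.
case: (ltnP j Lp) => hj.
  by rewrite /flipt (nth_mktuple _ _ (Ordinal hj)) andbT.
by rewrite !nth_default ?size_tuple // andbF.
Qed.

Lemma flipt_inv Lp k (t : Lp.-tuple bool) : flipt k (flipt k t) = t.
Proof.
apply: eq_from_tnth => i; rewrite !(tnth_nth false) !nth_flipt.
by rewrite -addbA addbb addbF.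
Qed.

Lemma flipt_inj Lp k : injective (@flipt Lp k).
Proof. exact: (can_inj (@flipt_inv Lp k)). Qed.

Lemma bit_flipt Lp k (t : Lp.-tuple bool) i :
  bit (flipt k t) i = bit t i (+) ((i.-1 == k) && (i.-1 < Lp)%N).
Proof. by rewrite /bit nth_flipt. Qed.

Lemma bit_flipt_ne Lp k (t : Lp.-tuple bool) i :
  i.-1 != k -> bit (flipt k t) i = bit t i.
Proof. by move=> h; rewrite bit_flipt (negbTE h) addbF. Qed.

Lemma bit_flipt_eq Lp k (t : Lp.-tuple bool) i :
  i.-1 = k -> (k < Lp)%N -> bit (flipt k t) i = ~~ bit t i.
Proof. by move=> h hk; rewrite bit_flipt h eqxx hk addbT. Qed.

Definition Pk (R : realType) (q beta : R) a x Lp (t : Lp.-tuple bool) k :=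
  \prod_(1 <= i < k.+1) bstep q beta a x i (bit t i.-1) (bit t i).

Lemma Pk_flip (R : realType) (q beta : R) a x Lp (t : Lp.-tuple bool) k j :
  (k <= j)%N -> Pk q beta a x (flipt j t) k = Pk q beta a x t k.
Proof.
move=> hkj; apply: eq_big_nat => i /andP[h1 h2].
rewrite !bit_flipt_ne //; apply/eqP; lia.
Qed.

Lemma bstep_false (R : realType) (q beta : R) a x i pj :
  bstep q beta a x i pj false = 1 - bstep q beta a x i pj true.
Proof. by []. Qed.

Lemma bstep_j1 (R : realType) (q beta : R) a x Lp (t : Lp.-tuple bool) m c :
  (1 <= m)%N -> bstep q beta a x m (bit t m.-1) c = bstep q beta a x m (j1of t m) c.
Proof.
move=> hm; rewrite /j1of; case: ifP => // h.
have -> : m = 1%N by lia.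
by rewrite /bstep eqxx.
Qed.

Lemma j1of_flipt Lp (t : Lp.-tuple bool) m k :
  (m <= k.+1)%N -> j1of (flipt k t) m = j1of t m.
Proof.
move=> h; rewrite /j1of; case: ifP => // h1.
rewrite bit_flipt_ne //; apply/eqP; lia.
Qed.

Lemma sum_zero (R : realType) (q beta : R) a x Lp m (Phi : bool -> bool -> R) :
  (1 <= m <= Lp)%N ->
  (forall c1, \sum_(c2 : bool) bstep q beta a x m c1 c2 * Phi c1 c2 = 0) ->
  \sum_(t : Lp.-tuple bool) Bprob q beta a x t * Phi (j1of t m) (bit t m) = 0.
Proof.
move=> /andP[hm1 hmL] hloc.
suff H : forall d, (m + d <= Lp)%N ->
  \sum_(t : Lp.-tuple bool) Pk q beta a x t (m + d) * Phi (j1of t m) (bit t m) = 0.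
  by have := H (Lp - m)%N; rewrite subnKC //; apply.
have two : forall S : R, S + S = 0 -> S = 0.
  by move=> S hS; lra.
elim => [|d IH] hd.
- apply: two; rewrite addn0.
  have Pm : forall t : Lp.-tuple bool, Pk q beta a x t m =
      Pk q beta a x t m.-1 * bstep q beta a x m (j1of t m) (bit t m).
    move=> t; rewrite -bstep_j1 // /Pk -{1}(prednK hm1) big_nat_recr //=.
    by rewrite prednK.
  rewrite {2}(reindex_inj (@flipt_inj Lp m.-1)) /= -big_split /=.
  apply: big1 => t _.
  rewrite !Pm Pk_flip // j1of_flipt ?prednK //.
  rewrite (@bit_flipt_eq Lp m.-1 t m) //; last by lia.
  have := hloc (j1of t m); rewrite big_bool.
  move: (Pk q beta a x t m.-1) (bstep q beta a x m (j1of t m)) (Phi (j1of t m)) => P B F.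
  case: (bit t m) => /= h; rewrite -!mulrA -mulrDr ?h ?mulr0 //.
  by rewrite addrC h mulr0.
- apply: two.
  have Pm : forall t : Lp.-tuple bool, Pk q beta a x t (m + d.+1) =
      Pk q beta a x t (m + d) * bstep q beta a x (m + d).+1 (bit t (m + d)) (bit t (m + d).+1).
    by move=> t; rewrite /Pk addnS big_nat_recr.
  rewrite {2}(reindex_inj (@flipt_inj Lp (m + d))) /= -big_split /=.
  have hd2 : (m + d <= Lp)%N by lia.
  rewrite -[RHS](IH hd2); apply: eq_bigr => t _.
  rewrite !Pm Pk_flip // j1of_flipt; last by lia.
  rewrite (@bit_flipt_ne Lp (m + d) t m); last by apply/eqP; lia.
  rewrite (@bit_flipt_ne Lp (m + d) t (m + d)); last by apply/eqP; lia.
  rewrite (@bit_flipt_eq Lp (m + d) t (m + d).+1) //; last by lia.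
  move: (Pk q beta a x t (m + d)) (bstep q beta a x (m + d).+1 (bit t (m + d))) (bstep_false q beta a x (m + d).+1 (bit t (m + d))) => P B HB.
  by case: (bit t (m + d).+1); rewrite /= HB; ring.
Qed.

Lemma qpochS (R : realType) (q z : R) k : qpoch q z k.+1 = qpoch q z k * (1 - z * q ^+ k).
Proof. by rewrite /qpoch big_ord_recr. Qed.

Lemma qpoch0 (R : realType) (q z : R) : qpoch q z 0 = 1.
Proof. by rewrite /qpoch big_ord0. Qed.

Lemma qq_lt1 (R : realType) (q : R) k : 0 < q -> q < 1 -> q * q ^+ k < 1.
Proof.
move=> h0 h1; rewrite -exprS; apply: exprn_ilt1 => //; exact: ltW.
Qed.

Lemma qq_neq (R : realType) (q : R) k : 0 < q -> q < 1 -> 1 - q * q ^+ k != 0.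
Proof.
move=> h0 h1; have := qq_lt1 k h0 h1; rewrite subr_eq0 => h.
by apply/eqP => e; move: h; rewrite -e ltxx.
Qed.

Lemma qpochq_neq0 (R : realType) (q : R) k : 0 < q -> q < 1 -> qpoch q q k != 0.
Proof.
move=> h0 h1; elim: k => [|k IH]; first by rewrite qpoch0 oner_neq0.
rewrite qpochS mulf_neq0 //; have := qq_lt1 k h0 h1.
by rewrite subr_eq0 => h; apply/eqP => e; move: h; rewrite -e ltxx.
Qed.

Definition pgF (R : realType) (q g : R) (i d : nat) : R :=
  g ^+ i * qpoch q g d * (qpoch q q (i + d) / (qpoch q q i * qpoch q q d)).

Lemma pgeom_neg (R : realType) (q g : R) G (j : int) : j < 0 -> pgeom q G g j = 0.
Proof. by move=> h; rewrite /pgeom h. Qed.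

Lemma pgeom_natE (R : realType) (q g : R) G (j : int) i d :
  G = (i + d)%N -> j = i%:Z -> pgeom q (Some G) g j = pgF q g i d.
Proof.
move=> -> ->; rewrite /pgeom /pgF /= leq_addr addKn //.
Qed.

Lemma pgeom_outE (R : realType) (q g : R) G (j : int) i :
  (G < i)%N -> j = i%:Z -> pgeom q (Some G) g j = 0.
Proof.
move=> h ->; rewrite /pgeom /=; case: ifP => //; lia.
Qed.

Lemma core_f (R : realType) (q g A beta : R) (G : nat) (k : int) :
  0 < q -> q < 1 -> 0 < A -> 0 < beta ->
  pgeom q (Some G) g k * ((1 - A * - beta * q ^+ absz (G%:Z - k)) / (1 - A * - beta))
  + pgeom q (Some G) g (k - 1) * (- (A * - beta) * (1 - q ^+ absz (G%:Z - k + 1)) / (1 - A * - beta))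
  = (1 - (1 - q ^+ G) * (A * beta / (1 + A * beta))) * pgeom q (Some G) g k
  + (1 - q ^+ G) * (A * beta / (1 + A * beta)) * pgeom q (Some (absz (G%:Z - 1))) g (k - 1).
Proof.
move=> q0 q1 A0 b0.
have hB : 1 + A * beta != 0 by apply/lt0r_neq0; nra.
have hB' : 1 - A * - beta = 1 + A * beta by rewrite mulrN opprK.
rewrite hB'.
have [kneg | kpos] := ltrP k 0.
  have z1 : forall G', pgeom q G' g k = 0 by move=> G'; apply: pgeom_neg.
  have z2 : forall G', pgeom q G' g (k - 1) = 0 by move=> G'; apply: pgeom_neg; lia.
  by rewrite !z1 !z2; ring.
have [n hk] : exists n : nat, k = n%:Z by exists (absz k); lia.
case: n hk => [|n] hk.
  have z2 : forall G', pgeom q G' g (k - 1) = 0 by move=> G'; apply: pgeom_neg; lia.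
  rewrite !z2 (@pgeom_natE _ _ _ _ k 0 G) //.
  have -> : absz (G%:Z - k) = G by lia.
  field; exact: hB.
case: (leqP n.+1 G) => hnG.
  have [d hG] : exists d, G = (n.+1 + d)%N by exists (G - n.+1)%N; lia.
  rewrite (@pgeom_natE _ _ _ _ k n.+1 d) // (@pgeom_natE _ _ _ _ (k - 1) n d.+1); [|lia|lia].
  rewrite (@pgeom_natE _ _ _ _ (k - 1) n d); [|lia|lia].
  have -> : absz (G%:Z - k) = d by lia.
  have -> : absz (G%:Z - k + 1) = d.+1 by lia.
  rewrite hG /pgF !addSn !addnS !qpochS !exprS !exprD.
  have := qpochq_neq0 n q0 q1; have := qpochq_neq0 d q0 q1; have := qpochq_neq0 (n + d) q0 q1.
  have := qq_lt1 n q0 q1; have := qq_lt1 d q0 q1; have := qq_lt1 (n + d) q0 q1.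
  rewrite exprD.
  move=> h1 h2 h3 h4 h5 h6.
  by field; rewrite h5 h6 hB !qq_neq.
have z1 : pgeom q (Some G) g k = 0 by apply: (@pgeom_outE _ _ _ _ _ n.+1); lia.
have e3 : (1 - q ^+ G) * (A * beta / (1 + A * beta)) * pgeom q (Some (absz (G%:Z - 1))) g (k - 1) = 0.
  case: G hnG z1 => [|G'] hnG z1; first by rewrite expr0 subrr !mul0r.
  rewrite (@pgeom_outE _ _ _ _ _ n) ?mulr0 //; lia.
rewrite z1 e3.
have [eG|hn] : n = G \/ (G < n)%N by lia.
  have -> : absz (G%:Z - k + 1) = 0%N by lia.
  by rewrite expr0 subrr mulr0 !mul0r !mulr0 !addr0.
rewrite (@pgeom_outE _ _ _ _ _ n) //; last by lia.
by rewrite !mul0r !mulr0 !addr0.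
Qed.

Lemma core_t (R : realType) (q g A beta : R) (G : nat) (k : int) :
  0 < q -> q < 1 -> 0 < A -> 0 < beta ->
  pgeom q (Some G) g k * ((1 - g * q ^+ absz (G%:Z - k)) / (1 - A * - beta))
  + pgeom q (Some G) g (k - 1) * ((g * q ^+ absz (G%:Z - k + 1) - A * - beta) / (1 - A * - beta))
  = (1 - (A * beta / (1 + A * beta))) * pgeom q (Some G.+1) g k
  + (A * beta / (1 + A * beta)) * pgeom q (Some G) g (k - 1).
Proof.
move=> q0 q1 A0 b0.
have hB : 1 + A * beta != 0 by apply/lt0r_neq0; nra.
have hB' : 1 - A * - beta = 1 + A * beta by rewrite mulrN opprK.
rewrite hB'.
have [kneg | kpos] := ltrP k 0.
  have z1 : forall G', pgeom q G' g k = 0 by move=> G'; apply: pgeom_neg.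
  have z2 : forall G', pgeom q G' g (k - 1) = 0 by move=> G'; apply: pgeom_neg; lia.
  by rewrite !z1 !z2; ring.
have [n hk] : exists n : nat, k = n%:Z by exists (absz k); lia.
case: n hk => [|n] hk.
  have z2 : forall G', pgeom q G' g (k - 1) = 0 by move=> G'; apply: pgeom_neg; lia.
  rewrite !z2 (@pgeom_natE _ _ _ _ k 0 G) // (@pgeom_natE _ _ _ _ k 0 G.+1) //.
  have -> : absz (G%:Z - k) = G by lia.
  rewrite /pgF !add0n !qpochS qpoch0 !expr0.
  have := qpochq_neq0 G q0 q1 => h1.
  by field; rewrite h1 hB qq_neq.
case: (leqP n.+1 G) => hnG.
  have [d hG] : exists d, G = (n.+1 + d)%N by exists (G - n.+1)%N; lia.
  rewrite (@pgeom_natE _ _ _ _ k n.+1 d) // (@pgeom_natE _ _ _ _ (k - 1) n d.+1); [|lia|lia].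
  rewrite (@pgeom_natE _ _ _ _ k n.+1 d.+1); [|lia|lia].
  have -> : absz (G%:Z - k) = d by lia.
  have -> : absz (G%:Z - k + 1) = d.+1 by lia.
  rewrite /pgF !addSn !addnS !qpochS !exprS !exprD.
  have := qpochq_neq0 n q0 q1; have := qpochq_neq0 d q0 q1; have := qpochq_neq0 (n + d) q0 q1.
  move=> h4 h5 h6.
  by field; rewrite h5 h6 hB !qq_neq.
have z1 : pgeom q (Some G) g k = 0 by apply: (@pgeom_outE _ _ _ _ _ n.+1); lia.
rewrite z1.
have [eG|hn] : n = G \/ (G < n)%N by lia.
  rewrite (@pgeom_natE _ _ _ _ (k - 1) G 0); [|lia|lia].
  rewrite (@pgeom_natE _ _ _ _ k G.+1 0); [|lia|lia].
  have -> : absz (G%:Z - k + 1) = 0%N by lia.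
  rewrite /pgF !addn0 !qpochS !qpoch0 !exprS !expr0.
  have := qpochq_neq0 G q0 q1 => h1.
  by field; rewrite h1 hB qq_neq.
rewrite (@pgeom_outE _ _ _ _ (k - 1) n); [|lia|lia].
rewrite (@pgeom_outE _ _ _ G.+1 k n.+1); [|lia|lia].
by rewrite !mul0r !mulr0 !addr0.
Qed.

Lemma Ls_Some (R : realType) (q u A nu : R) n j1 j2 :
  Lsample q u A nu (Some n) j1 j2 =
  match j1, j2 with
  | false, false => (1 - A * u * q ^+ n) / (1 - A * u)
  | false, true => (- (A * u) * (1 - q ^+ n)) / (1 - A * u)
  | true, true => (nu * q ^+ n - A * u) / (1 - A * u)
  | true, false => (1 - nu * q ^+ n) / (1 - A * u)
  end.
Proof.
rewrite /Lsample /Lw /ext_conserve /qpow.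
case: j1; case: j2 => /=.
- have -> : (1 <= n + 1)%N by lia.
  by have -> : (n + 1 == n + 1 - 1 + 1)%N by apply/eqP; lia.
- by have -> : (n + 1 == n + 1 - 0 + 0)%N by apply/eqP; lia.
- case: n => [|n] /=; first by rewrite expr0 subrr mulr0 mul0r.
  by have -> : (n.+1 + 0 == n.+1 + 0 - 1 + 1)%N by apply/eqP; lia.
- by have -> : (n + 0 == n + 0 - 0 + 0)%N by apply/eqP; lia.
Qed.

Unset Implicit Arguments.

Theorem proposition5p10 (R : realType) (q alpha beta : R) (a : nat -> R)
    (Lp : nat) (x : nat -> int) (m : nat) :
  0 < q -> q < 1 ->
  (1 <= Lp)%N ->
  (forall i : nat, (1 <= i <= Lp)%N -> 0 < a i) ->
  0 < alpha -> 0 < beta ->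
  (forall i : nat, (1 <= i <= Lp)%N -> alpha * a i < 1) ->
  (forall i : nat, (2 <= i <= Lp)%N -> x i < x i.-1) ->
  (1 <= m <= Lp)%N ->
  forall (w : option int) (v : int),
    law_dagger q alpha beta a x Lp m w v = law_BG q alpha beta a x Lp m w v.
Proof.
move=> q0 q1 hL ha al0 be0 hal hx hm w v.
have am0 : 0 < a m by apply: ha.
apply/eqP; rewrite -subr_eq0; apply/eqP.
rewrite /law_dagger /law_BG -sumrB.
pose FL (c1 : bool) := \sum_(j2 : bool)
      let xm' := v - j2%:Z in
      let g := xm' - x m in
      let i1 := if (m <= 1)%N then None else Some (absz (x m.-1 - xm' - 1)%R) in
      pgeom q (gapx x m) (a m * alpha) g *
      Lsample q (- beta) (a m) (alpha * a m) i1 c1 j2.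
pose yp (c1 : bool) : option int := if (m <= 1)%N then None else Some (x m.-1 + c1%:Z).
pose FR (c1 c2 : bool) := pgeom q (if (m <= 1)%N then None else Some (absz (x m.-1 + c1%:Z - (x m + c2%:Z) - 1)%R))
     (a m * alpha) (v - (x m + c2%:Z)).
pose Phi c1 c2 := (yp c1 == w)%:R * (FL c1 - FR c1 c2).
rewrite (eq_bigr (fun t => Bprob q beta a x t * Phi (j1of t m) (bit t m))); last first.
  move=> t _.
  have Ey : ypos x t m.-1 = yp (j1of t m).
    rewrite /ypos /yp /j1of; case: (leqP m 1) => h.
      by have -> : m.-1 = 0%N by lia.
    by have -> : (m.-1 == 0%N) = false by apply/negbTE; lia.
  have Eg : gapy x t m = if (m <= 1)%N then None else
      Some (absz (x m.-1 + (j1of t m)%:Z - (x m + (bit t m)%:Z) - 1)%R).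
    by rewrite /gapy /yfin /j1of; case: ifP.
  rewrite Ey Eg /Phi /yfin -/(FL (j1of t m)).
  rewrite /FR; ring.
apply: (@sum_zero R q beta a x Lp m Phi hm) => c1.
suff key : FL c1 = bstep q beta a x m c1 true * FR c1 true
                  + bstep q beta a x m c1 false * FR c1 false.
  by rewrite big_bool /Phi key bstep_false /=; ring.
have [m1|m2] : m = 1%N \/ (2 <= m)%N by lia.
  subst m.
  rewrite /FL /FR /bstep /= big_bool /Lsample /Lw /= /qpow.
  rewrite /gapx /=.
  have -> : v - 1%Z - x 1%N = v - (x 1%N + 1%Z) by lia.
  have -> : v - 0%Z - x 1%N = v - (x 1%N + 0%Z) by lia.
  have hB : 1 + a 1%N * beta != 0 by apply/lt0r_neq0; nra.
  rewrite !mulrN !opprK.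
  by case: c1; field.
have hxm : x m < x m.-1 by apply: hx; lia.
have h1 : (m <= 1)%N = false by apply/negbTE; lia.
have h1' : (m == 1%N) = false by apply/negbTE; lia.
pose G := absz (x m.-1 - x m - 1)%R.
have hG : G%:Z = x m.-1 - x m - 1 by rewrite /G; lia.
have gm : gapx x m = Some G by rewrite /gapx h1.
rewrite /FL /FR /bstep /= big_bool h1 h1' gm !Ls_Some.
have e1 : v - 1%Z - x m = (v - x m) - 1 by lia.
have e0 : v - 0%Z - x m = (v - x m) by lia.
have a1 : absz (x m.-1 - (v - 1%Z) - 1)%R = absz (G%:Z - (v - x m) + 1)%R by lia.
have a0 : absz (x m.-1 - (v - 0%Z) - 1)%R = absz (G%:Z - (v - x m))%R by lia.
have f1 : v - (x m + 1%Z) = (v - x m) - 1 by lia.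
have f0 : v - (x m + 0%Z) = (v - x m) by lia.
rewrite e1 e0 a1 a0 f1 f0.
case: c1 => /=.
  have -> : absz (x m.-1 + 1%Z - (x m + 1%Z) - 1)%R = G by lia.
  have -> : absz (x m.-1 + 1%Z - (x m + 0%Z) - 1)%R = G.+1 by lia.
  rewrite [alpha * a m]mulrC addrC core_t //; ring.
have -> : absz (x m.-1 + 0%Z - (x m + 1%Z) - 1)%R = absz (G%:Z - 1)%R by lia.
have -> : absz (x m.-1 + 0%Z - (x m + 0%Z) - 1)%R = G by lia.
rewrite addrC core_f //; ring.
Qed.
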